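(* Let $\mathcal V,\mathcal W$ be operator spaces and $\Omega\subseteq\mathcal V_{\mathrm{nc}}$ a uniformly open nc set. For a nc function $f:\Omega\to\mathcal W_{\mathrm{nc}}$ the following are equivalent: $f$ is uniformly locally bounded; $f$ is continuous with respect to the uniformly-open topologies on $\mathcal V_{\mathrm{nc}}$ and $\mathcal W_{\mathrm{nc}}$; $f$ is uniformly analytic.
   Context: An operator space is a complex Banach space $\mathcal V$ with norms $\|\cdot\|_n$ on $\mathcal V^{n\times n}$ such that $\|X\oplus Y\|_{n+m}=\max\{\|X\|_n,\|Y\|_m\}$ and $\|TXS\|_n\le\|T\|\|X\|_n\|S\|$ for $T,S\in\mathbb C^{n\times n}$, where $X\oplus Y=\begin{bmatrix}X&0\\0&Y\end{bmatrix}$. $\mathcal V_{\mathrm{nc}}=\coprod_n\mathcal V^{n\times n}$. For $Y\in\mathcal V^{s\times s}$, $r>0$, $B_{\mathrm{nc}}(Y,r)=\coprod_m\{X\in\mathcal V^{sm\times sm}:\|X-\bigoplus_{\alpha=1}^mY\|_{sm}<r\}$; nc balls form a base of a topology on $\mathcal V_{\mathrm{nc}}$, the uniformly-open topology (its open sets are uniformly open). A nc set is closed under direct sums, $\Omega_n=\Omega\cap\mathcal V^{n\times n}$; a nc function satisfies $f(\Omega_n)\subseteq\mathcal W^{n\times n}$, $f(X\oplus Y)=f(X)\oplus f(Y)$, $f(SXS^{-1})=Sf(X)S^{-1}$ for invertible $S\in\mathbb C^{n\times n}$ with $X,SXS^{-1}\in\Omega_n$. $f$ is uniformly locally bounded if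 for every $s$ and $Y\in\Omega_s$ there is $r>0$ with $B_{\mathrm{nc}}(Y,r)\subseteq\Omega$ and $\sup\{\|f(X)\|_{sm}:m\in\mathbb N,X\in B_{\mathrm{nc}}(Y,r)\cap\mathcal V^{sm\times sm}\}<\infty$. $f$ is G-differentiable if for all $n$, $X\in\Omega_n$, $Z\in\mathcal V^{n\times n}$, $\lim_{t\to0}(f(X+tZ)-f(X))/t$ exists in $\mathcal W^{n\times n}$; $f$ is uniformly analytic if it is uniformly locally bounded and G-differentiable. *)

(* Defs.v *)
From HB Require Import structures.
From mathcomp Require Import all_boot all_order all_algebra.
From mathcomp Require Import boolp classical_sets reals.
From mathcomp Require Import complex.
Set Implicit Arguments. Unset Strict Implicit. Unset Printing Implicit Defensive.
Import Order.TTheory GRing.Theory Num.Theory.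
Local Open Scope ring_scope.
Local Open Scope classical_set_scope.

Section OpSpaces.
Variable R : realType.
Local Notation C := (R[i]).

Definition cabs (z : C) : R := ComplexField.Normc.normc z.

Definition vnorm n (v : 'cV[C]_n) : R := Num.sqrt (\sum_(i < n) cabs (v i 0) ^+ 2).

Definition opnorm n (T : 'M[C]_n) : R :=
  sup [set vnorm (T *m v) | v in [set v : 'cV[C]_n | vnorm v <= 1]].

Variable V : lmodType C.

Definition scalemxV n (c : C) (X : 'M[V]_n) : 'M[V]_n := map_mx (fun v => c *: v) X.

Definition cmul n (T : 'M[C]_n) (X : 'M[V]_n) (S : 'M[C]_n) : 'M[V]_n :=
  \matrix_(i, j) \sum_(k < n) \sum_(l < n) (T i k * S l j) *: X k l.

Definition dsum n m (X : 'M[V]_n) (Y : 'M[V]_m) : 'M[V]_(n + m) := block_mx X 0 0 Y.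

Fixpoint ampl s (m : nat) (Y : 'M[V]_s) : 'M[V]_(m * s) :=
  match m return 'M[V]_(m * s) with
  | 0 => 0
  | m'.+1 => dsum Y (ampl m' Y)
  end.

(* operator space structure: norms nrm n on V^{n x n} (n >= 1), with nrm 1
   (on 1x1 matrices, i.e. on V) a complete norm, satisfying Ruan's axioms *)
Definition opspace (nrm : forall n, 'M[V]_n -> R) : Prop :=
  [/\ (forall n (X Y : 'M[V]_n) (c : C), (0 < n)%N ->
         [/\ nrm n (X + Y) <= nrm n X + nrm n Y,
             nrm n (scalemxV c X) = cabs c * nrm n X &
             (nrm n X = 0 -> X = 0)]),
      (forall u : nat -> V,
         (forall e : R, 0 < e -> exists N, forall p q, (N <= p)%N -> (N <= q)%N ->
              nrm 1%N (const_mx (u p - u q)) < e) ->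
         exists l : V, forall e : R, 0 < e -> exists N, forall p, (N <= p)%N ->
              nrm 1%N (const_mx (u p - l)) < e),
      (forall n m (X : 'M[V]_n) (Y : 'M[V]_m), (0 < n)%N -> (0 < m)%N ->
         nrm (n + m)%N (dsum X Y) = Num.max (nrm n X) (nrm m Y)) &
      (forall n (T S : 'M[C]_n) (X : 'M[V]_n), (0 < n)%N ->
         nrm n (cmul T X S) <= opnorm T * nrm n X * opnorm S)].

(* V_nc = disjoint union of the V^{n x n} *)
Definition ncpt := {n : nat & 'M[V]_n}.
Definition ncp n (X : 'M[V]_n) : ncpt := existT (fun k => 'M[V]_k) n X.

Definition ncball (nrm : forall n, 'M[V]_n -> R) s (Y : 'M[V]_s) (r : R) : set ncpt :=
  fun p => exists m (X : 'M[V]_(m * s)),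
      (0 < m)%N /\ p = ncp X /\ nrm (m * s)%N (X - ampl m Y) < r.

(* uniformly open sets: open sets of the topology with base the nc balls
   (centres of positive size, positive radius) *)
Definition uopen (nrm : forall n, 'M[V]_n -> R) (U : set ncpt) : Prop :=
  forall p, U p -> exists s (Y : 'M[V]_s) (r : R),
      [/\ (0 < s)%N, 0 < r, ncball nrm Y r p & ncball nrm Y r `<=` U].

Definition ncset (Om : set ncpt) : Prop :=
  forall n m (X : 'M[V]_n) (Y : 'M[V]_m), Om (ncp X) -> Om (ncp Y) -> Om (ncp (dsum X Y)).

End OpSpaces.

Arguments ncpt {R} V.
Arguments ncp {R V n}.

Section NCFun.
Variable R : realType.
Local Notation C := (R[i]).
Variables V W : lmodType C.
Variable nV : forall n, 'M[V]_n -> R.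
Variable nW : forall n, 'M[W]_n -> R.
Variable Om : set (ncpt V).
(* f is a function Om -> W_nc; it is given as a family of maps on all of
   V^{n x n}, only its values on Om matter *)
Variable f : forall n, 'M[V]_n -> 'M[W]_n.

Definition ncfun : Prop :=
  (forall n m (X : 'M[V]_n) (Y : 'M[V]_m), Om (ncp X) -> Om (ncp Y) ->
      f (dsum X Y) = dsum (f X) (f Y)) /\
  (forall n (X : 'M[V]_n) (S : 'M[C]_n), S \in unitmx ->
      Om (ncp X) -> Om (ncp (cmul S X (invmx S))) ->
      f (cmul S X (invmx S)) = cmul S (f X) (invmx S)).

Definition uloc_bounded : Prop :=
  forall s (Y : 'M[V]_s), Om (ncp Y) ->
    exists r : R, [/\ 0 < r, ncball nV Y r `<=` Om &
      exists M : R, forall n (X : 'M[V]_n), ncball nV Y r (ncp X) -> nW (f X) <= M].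

(* continuity of f : Om -> W_nc, Om with the subspace topology *)
Definition ucontinuous : Prop :=
  forall U : set (ncpt W), uopen nW U ->
    exists O : set (ncpt V), uopen nV O /\
      forall n (X : 'M[V]_n), (Om (ncp X) /\ U (ncp (f X))) <-> (Om (ncp X) /\ O (ncp X)).

Definition G_differentiable : Prop :=
  forall n (X Z : 'M[V]_n), Om (ncp X) ->
    exists L : 'M[W]_n, forall e : R, 0 < e -> exists d : R, 0 < d /\
      forall t : C, t != 0 -> cabs t < d ->
        nW (scalemxV t^-1 (f (X + scalemxV t Z) - f X) - L) < e.

Definition uanalytic : Prop := uloc_bounded /\ G_differentiable.

End NCFun.

(* Main.v *)
Require Import Defs.
From HB Require Import structures.
From mathcomp Require Import all_boot all_order all_algebra.
From mathcomp Require Import boolp classical_sets reals.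
From mathcomp Require Import complex.
From mathcomp Require Import ring lra.
From Stdlib Require Import Eqdep_dec PeanoNat.
Set Implicit Arguments. Unset Strict Implicit. Unset Printing Implicit Defensive.
Import Order.TTheory GRing.Theory Num.Theory.
Local Open Scope ring_scope.
Local Open Scope classical_set_scope.


Section Basic.
Variable R : realType.
Local Notation C := (R[i]).
Variable V : lmodType C.

Lemma cabs0 : cabs (0 : C) = 0. Proof. exact: ComplexField.Normc.normc0. Qed.
Lemma cabs1 : cabs (1 : C) = 1. Proof. exact: ComplexField.Normc.normc1. Qed.
Lemma cabsM (a b : C) : cabs (a * b) = cabs a * cabs b.
Proof. exact: ComplexField.Normc.normcM. Qed.
Lemma cabsN (a : C) : cabs (- a) = cabs a. Proof. exact: normcN. Qed.
Lemma cabsV (a : C) : cabs (a^-1) = (cabs a)^-1.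
Proof. exact: ComplexField.Normc.normcV. Qed.
Lemma cabs_ge0 (a : C) : 0 <= cabs a.
Proof. by case: a => x y; rewrite /cabs /=; apply: sqrtr_ge0. Qed.
Lemma cabsR (a : R) : cabs (a%:C%C) = `|a|.
Proof. by rewrite /cabs /= expr0n /= addr0 sqrtr_sqr. Qed.
Lemma cabs_eq0 (a : C) : cabs a = 0 -> a = 0.
Proof. exact: ComplexField.Normc.eq0_normc. Qed.
Lemma cabsD (a b : C) : cabs (a + b) <= cabs a + cabs b.
Proof. exact: le_normcD. Qed.

Lemma scalemxV0 n (X : 'M[V]_n) : scalemxV 0 X = 0.
Proof. by apply/matrixP => i j; rewrite !mxE scale0r. Qed.
Lemma scalemxV1 n (X : 'M[V]_n) : scalemxV 1 X = X.
Proof. by apply/matrixP => i j; rewrite !mxE scale1r. Qed.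
Lemma scalemxVN1 n (X : 'M[V]_n) : scalemxV (-1) X = - X.
Proof. by apply/matrixP => i j; rewrite !mxE scaleN1r. Qed.
Lemma scalemxVA n a b (X : 'M[V]_n) : scalemxV a (scalemxV b X) = scalemxV (a * b) X.
Proof. by apply/matrixP => i j; rewrite !mxE scalerA. Qed.
Lemma scalemxVD n a (X Y : 'M[V]_n) : scalemxV a (X + Y) = scalemxV a X + scalemxV a Y.
Proof. by apply/matrixP => i j; rewrite !mxE scalerDr. Qed.
Lemma scalemxVN n a (X : 'M[V]_n) : scalemxV a (- X) = - scalemxV a X.
Proof. by apply/matrixP => i j; rewrite !mxE scalerN. Qed.
Lemma scalemxVB n a (X Y : 'M[V]_n) : scalemxV a (X - Y) = scalemxV a X - scalemxV a Y.
Proof. by rewrite scalemxVD scalemxVN. Qed.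
Lemma scalemxVDl n a b (X : 'M[V]_n) : scalemxV (a + b) X = scalemxV a X + scalemxV b X.
Proof. by apply/matrixP => i j; rewrite !mxE scalerDl. Qed.
Lemma scalemxV_0 n a : scalemxV a (0 : 'M[V]_n) = 0.
Proof. by apply/matrixP => i j; rewrite !mxE scaler0. Qed.

Variable nrm : forall n, 'M[V]_n -> R.
Hypothesis Hop : opspace nrm.

Lemma nrmD n (X Y : 'M[V]_n) : (0 < n)%N -> nrm (X + Y) <= nrm X + nrm Y.
Proof. by case: Hop => H _ _ _ n0; case: (H n X Y 0 n0). Qed.
Lemma nrmZ n c (X : 'M[V]_n) : (0 < n)%N -> nrm (scalemxV c X) = cabs c * nrm X.
Proof. by case: Hop => H _ _ _ n0; case: (H n X X c n0). Qed.
Lemma nrm_eq0 n (X : 'M[V]_n) : (0 < n)%N -> nrm X = 0 -> X = 0.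
Proof. by case: Hop => H _ _ _ n0; case: (H n X X 0 n0). Qed.
Lemma nrm0 n : (0 < n)%N -> nrm (0 : 'M[V]_n) = 0.
Proof. by move=> n0; rewrite -(scalemxV0 0) nrmZ // cabs0 mul0r. Qed.
Lemma nrmN n (X : 'M[V]_n) : (0 < n)%N -> nrm (- X) = nrm X.
Proof. by move=> n0; rewrite -scalemxVN1 nrmZ // cabsN cabs1 mul1r. Qed.
Lemma nrm_ge0 n (X : 'M[V]_n) : (0 < n)%N -> 0 <= nrm X.
Proof.
move=> n0; have := nrmD X (- X) n0; rewrite subrr nrm0 // nrmN //.
move=> h; lra.
Qed.
Lemma nrmB n (X Y : 'M[V]_n) : (0 < n)%N -> nrm (X - Y) = nrm (Y - X).
Proof. by move=> n0; rewrite -nrmN // opprB. Qed.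
Lemma nrm_dsum n m (X : 'M[V]_n) (Y : 'M[V]_m) : (0 < n)%N -> (0 < m)%N ->
  nrm (dsum X Y) = Num.max (nrm X) (nrm Y).
Proof. by case: Hop => _ _ H _; apply: H. Qed.
Lemma nrm_cmul n (T S : 'M[C]_n) (X : 'M[V]_n) : (0 < n)%N ->
  nrm (cmul T X S) <= opnorm T * nrm X * opnorm S.
Proof. by case: Hop => _ _ _ H; apply: H. Qed.

End Basic.


Section Sig.
Variable R : realType.
Local Notation C := (R[i]).
Variable V : lmodType C.

Lemma ncp_size a b (X : 'M[V]_a) (Y : 'M[V]_b) : ncp X = ncp Y -> a = b.
Proof. by move=> H; have := f_equal (@projT1 _ _) H. Qed.

Lemma ncp_inj n (X Y : 'M[V]_n) : ncp X = ncp Y -> X = Y.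
Proof. by move=> H; apply: (inj_pair2_eq_dec _ Nat.eq_dec) H. Qed.

Lemma ncp_cast a b (e : a = b) (X : 'M[V]_a) : ncp (castmx (e, e) X) = ncp X.
Proof. by case: b / e; rewrite castmx_id. Qed.

Lemma ncp_dsum a a' b b' (A : 'M[V]_a) (A' : 'M[V]_a') (B : 'M[V]_b) (B' : 'M[V]_b') :
  ncp A = ncp A' -> ncp B = ncp B' -> ncp (dsum A B) = ncp (dsum A' B').
Proof.
move=> H1 H2; have e1 := ncp_size H1; have e2 := ncp_size H2; subst a' b'.
by rewrite (ncp_inj H1) (ncp_inj H2).
Qed.

Lemma ncp_add a a' (A B : 'M[V]_a) (A' B' : 'M[V]_a') :
  ncp A = ncp A' -> ncp B = ncp B' -> ncp (A + B) = ncp (A' + B').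
Proof.
move=> H1 H2; have e1 := ncp_size H1; subst a'.
by rewrite (ncp_inj H1) (ncp_inj H2).
Qed.

Lemma ncp_opp a a' (A : 'M[V]_a) (A' : 'M[V]_a') :
  ncp A = ncp A' -> ncp (- A) = ncp (- A').
Proof. by move=> H1; have e1 := ncp_size H1; subst a'; rewrite (ncp_inj H1). Qed.

Lemma ncp_sub a a' (A B : 'M[V]_a) (A' B' : 'M[V]_a') :
  ncp A = ncp A' -> ncp B = ncp B' -> ncp (A - B) = ncp (A' - B').
Proof. by move=> H1 H2; apply: ncp_add => //; apply: ncp_opp. Qed.

Lemma ncp_fun (T : Type) (g : forall n, 'M[V]_n -> T) a a' (A : 'M[V]_a) (A' : 'M[V]_a') :
  ncp A = ncp A' -> g a A = g a' A'.
Proof. by move=> H; have := f_equal (fun p => g (projT1 p) (projT2 p)) H. Qed.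

Lemma ncp_ampl k a a' (A : 'M[V]_a) (A' : 'M[V]_a') :
  ncp A = ncp A' -> ncp (ampl k A) = ncp (ampl k A').
Proof. by move=> H1; have e1 := ncp_size H1; subst a'; rewrite (ncp_inj H1). Qed.

Lemma dsum0l N (P : 'M[V]_N) (Z : 'M[V]_0) : ncp (dsum Z P) = ncp P.
Proof.
have E : dsum Z P = P :> 'M_N.
  apply/matrixP => i j.
  have Hi : rshift 0 i = i by apply: val_inj.
  have Hj : rshift 0 j = j by apply: val_inj.
  have H := block_mxEdr Z (0:'M_(0,N)) (0:'M_(N,0)) P i j.
  by rewrite /dsum -H Hi Hj.
exact: (f_equal (@ncp R V N) E).
Qed.

Lemma dsum0r N (P : 'M[V]_N) (Z : 'M[V]_0) : ncp (dsum P Z) = ncp P.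
Proof.
rewrite -(ncp_cast (addn0 N)); congr (ncp _); apply/matrixP => i j.
rewrite castmxE.
have -> : cast_ord (esym (addn0 N)) i = lshift 0 i by apply: val_inj.
have -> : cast_ord (esym (addn0 N)) j = lshift 0 j by apply: val_inj.
by rewrite /dsum block_mxEul.
Qed.

Lemma dsumA a b c (A : 'M[V]_a) (B : 'M[V]_b) (Cc : 'M[V]_c) :
  ncp (dsum A (dsum B Cc)) = ncp (dsum (dsum A B) Cc).
Proof.
rewrite /dsum -[0 : 'M_(a, b + c)]row_mx0 -[0 : 'M_(b + c, a)]col_mx0.
rewrite block_mxA row_mx0 col_mx0.
exact: ncp_cast.


Qed.

Lemma ampl1 s (Y : 'M[V]_s) : ncp (ampl 1 Y) = ncp Y.
Proof. exact: dsum0r. Qed.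

Lemma ampl_add s m k (Y : 'M[V]_s) :
  ncp (ampl (m + k)%N Y) = ncp (dsum (ampl m Y) (ampl k Y)).
Proof.
elim: m => [|m IH]; first by rewrite /= dsum0l.
rewrite addSn /= (ncp_dsum (erefl (ncp Y)) IH); exact: dsumA.
Qed.

Lemma ampl_mul s m k (Y : 'M[V]_s) :
  ncp (ampl k (ampl m Y)) = ncp (ampl (k * m)%N Y).
Proof.
elim: k => [|k IH]; first by [].
rewrite [(k.+1 * m)%N]mulSn ampl_add /=; exact: ncp_dsum.
Qed.

Lemma dsumB a b (A A' : 'M[V]_a) (B B' : 'M[V]_b) :
  dsum (A - A') (B - B') = dsum A B - dsum A' B'.
Proof. by rewrite /dsum opp_block_mx add_block_mx !subr0. Qed.

Lemma ampl_sub s k (X Y : 'M[V]_s) : ampl k (X - Y) = ampl k X - ampl k Y.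
Proof. by elim: k => [|k IH] /=; [rewrite subr0 | rewrite IH dsumB]. Qed.

End Sig.


Section LM.
Variable R : realType.
Local Notation C := (R[i]).
Variable V : lmodType C.

Definition lmul m n p (T : 'M[C]_(m,n)) (X : 'M[V]_(n,p)) : 'M[V]_(m,p) :=
  \matrix_(i, j) \sum_k T i k *: X k j.
Definition rmul m n p (X : 'M[V]_(m,n)) (S : 'M[C]_(n,p)) : 'M[V]_(m,p) :=
  \matrix_(i, j) \sum_k S k j *: X i k.

Lemma cmulE n (T S : 'M[C]_n) (X : 'M[V]_n) : cmul T X S = lmul T (rmul X S).
Proof.
apply/matrixP => i j; rewrite !mxE; apply: eq_bigr => k _.
rewrite mxE scaler_sumr; apply: eq_bigr => l _; by rewrite scalerA.
Qed.

Lemma lmul_scalar n a (X : 'M[V]_n) : lmul a%:M X = scalemxV a X.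
Proof.
apply/matrixP => i j; rewrite !mxE (bigD1 i) //= big1 ?addr0.
  by rewrite mxE eqxx mulr1n.
by move=> k ki; rewrite mxE eq_sym (negbTE ki) mulr0n scale0r.
Qed.

Lemma rmul_scalar n a (X : 'M[V]_n) : rmul X a%:M = scalemxV a X.
Proof.
apply/matrixP => i j; rewrite !mxE (bigD1 j) //= big1 ?addr0.
  by rewrite mxE eqxx mulr1n.
by move=> k kj; rewrite mxE (negbTE kj) mulr0n scale0r.
Qed.

Lemma lmul_col m1 m2 n p (T1 : 'M[C]_(m1, n)) (T2 : 'M[C]_(m2, n)) (X : 'M[V]_(n, p)) :
  lmul (col_mx T1 T2) X = col_mx (lmul T1 X) (lmul T2 X).
Proof.
apply/matrixP => i j; rewrite -(splitK i); case: (split i) => i' /=.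
  by rewrite col_mxEu !mxE; apply: eq_bigr => k _; rewrite col_mxEu.
by rewrite col_mxEd !mxE; apply: eq_bigr => k _; rewrite col_mxEd.
Qed.

Lemma lmul_row m n p1 p2 (T : 'M[C]_(m, n)) (X1 : 'M[V]_(n, p1)) (X2 : 'M[V]_(n, p2)) :
  lmul T (row_mx X1 X2) = row_mx (lmul T X1) (lmul T X2).
Proof.
apply/matrixP => i j; rewrite -(splitK j); case: (split j) => j' /=.
  by rewrite row_mxEl !mxE; apply: eq_bigr => k _; rewrite row_mxEl.
by rewrite row_mxEr !mxE; apply: eq_bigr => k _; rewrite row_mxEr.
Qed.

Lemma lmul_rowcol m n1 n2 p (T1 : 'M[C]_(m, n1)) (T2 : 'M[C]_(m, n2))
  (X1 : 'M[V]_(n1, p)) (X2 : 'M[V]_(n2, p)) :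
  lmul (row_mx T1 T2) (col_mx X1 X2) = lmul T1 X1 + lmul T2 X2.
Proof.
apply/matrixP => i j; rewrite !mxE big_split_ord /=; congr (_ + _).
  by apply: eq_bigr => k _; rewrite row_mxEl col_mxEu.
by apply: eq_bigr => k _; rewrite row_mxEr col_mxEd.
Qed.

Lemma rmul_col m1 m2 n p (X1 : 'M[V]_(m1, n)) (X2 : 'M[V]_(m2, n)) (S : 'M[C]_(n, p)) :
  rmul (col_mx X1 X2) S = col_mx (rmul X1 S) (rmul X2 S).
Proof.
apply/matrixP => i j; rewrite -(splitK i); case: (split i) => i' /=.
  by rewrite col_mxEu !mxE; apply: eq_bigr => k _; rewrite col_mxEu.
by rewrite col_mxEd !mxE; apply: eq_bigr => k _; rewrite col_mxEd.
Qed.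

Lemma rmul_row m n p1 p2 (X : 'M[V]_(m, n)) (S1 : 'M[C]_(n, p1)) (S2 : 'M[C]_(n, p2)) :
  rmul X (row_mx S1 S2) = row_mx (rmul X S1) (rmul X S2).
Proof.
apply/matrixP => i j; rewrite -(splitK j); case: (split j) => j' /=.
  by rewrite row_mxEl !mxE; apply: eq_bigr => k _; rewrite row_mxEl.
by rewrite row_mxEr !mxE; apply: eq_bigr => k _; rewrite row_mxEr.
Qed.

Lemma rmul_rowcol m n1 n2 p (X1 : 'M[V]_(m, n1)) (X2 : 'M[V]_(m, n2))
  (S1 : 'M[C]_(n1, p)) (S2 : 'M[C]_(n2, p)) :
  rmul (row_mx X1 X2) (col_mx S1 S2) = rmul X1 S1 + rmul X2 S2.
Proof.
apply/matrixP => i j; rewrite !mxE big_split_ord /=; congr (_ + _).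
  by apply: eq_bigr => k _; rewrite row_mxEl col_mxEu.
by apply: eq_bigr => k _; rewrite row_mxEr col_mxEd.
Qed.

Definition Kb N (a b c d : C) : 'M[C]_(N + N) := block_mx a%:M b%:M c%:M d%:M.

Lemma lmulK N a b c d (X11 X12 X21 X22 : 'M[V]_N) :
  lmul (Kb N a b c d) (block_mx X11 X12 X21 X22) =
  block_mx (scalemxV a X11 + scalemxV b X21) (scalemxV a X12 + scalemxV b X22)
           (scalemxV c X11 + scalemxV d X21) (scalemxV c X12 + scalemxV d X22).
Proof.
rewrite /Kb [block_mx a%:M _ _ _]block_mxEv lmul_col.
rewrite [block_mx X11 _ _ _]block_mxEh !lmul_row !lmul_rowcol !lmul_scalar.
by rewrite block_mxEv.
Qed.

Lemma rmulK N a b c d (X11 X12 X21 X22 : 'M[V]_N) :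
  rmul (block_mx X11 X12 X21 X22) (Kb N a b c d) =
  block_mx (scalemxV a X11 + scalemxV c X12) (scalemxV b X11 + scalemxV d X12)
           (scalemxV a X21 + scalemxV c X22) (scalemxV b X21 + scalemxV d X22).
Proof.
rewrite /Kb [block_mx a%:M _ _ _]block_mxEh rmul_row.
rewrite [block_mx X11 _ _ _]block_mxEv !rmul_col !rmul_rowcol !rmul_scalar.
by rewrite block_mxEh.
Qed.

Lemma cmulK N a b c d a' b' c' d' (X11 X12 X21 X22 : 'M[V]_N) :
  cmul (Kb N a b c d) (block_mx X11 X12 X21 X22) (Kb N a' b' c' d') =
  lmul (Kb N a b c d) (rmul (block_mx X11 X12 X21 X22) (Kb N a' b' c' d')).
Proof. exact: cmulE. Qed.

End LM.


Section Opn.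
Variable R : realType.
Local Notation C := (R[i]).

Definition sqn n (v : 'cV[C]_n) : R := \sum_(i < n) cabs (v i 0) ^+ 2.

Lemma sqn_ge0 n (v : 'cV[C]_n) : 0 <= sqn v.
Proof. by apply: sumr_ge0 => i _; apply: sqr_ge0. Qed.

Lemma sqn0 n : sqn (0 : 'cV[C]_n) = 0.
Proof. by apply: big1 => i _; rewrite mxE cabs0 expr0n. Qed.

Lemma sqn_col n1 n2 (x : 'cV[C]_n1) (y : 'cV[C]_n2) : sqn (col_mx x y) = sqn x + sqn y.
Proof.
rewrite /sqn big_split_ord /=; congr (_ + _); apply: eq_bigr => i _.
  by rewrite col_mxEu. by rewrite col_mxEd.
Qed.

Lemma vnorm_sqn n (v : 'cV[C]_n) : vnorm v = Num.sqrt (sqn v).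
Proof. by []. Qed.

Lemma opnorm_le1 n (T : 'M[C]_n) : (forall v, sqn (T *m v) <= sqn v) ->
  0 <= opnorm T <= 1.
Proof.
move=> H.
set E := [set vnorm (T *m v) | v in [set v : 'cV[C]_n | vnorm v <= 1]].
have E0 : E 0.
  exists 0; first by rewrite /= vnorm_sqn sqn0 sqrtr0.
  by rewrite mulmx0 vnorm_sqn sqn0 sqrtr0.
have ub : ubound E 1.
  move=> x [v /= hv <-]; apply: le_trans hv.
  by rewrite !vnorm_sqn; apply: ler_wsqrtr.
apply/andP; split.
  by apply: (ub_le_sup _ E0); exists 1.
by apply: ge_sup => //; exists 0.
Qed.

Lemma opnorm1 n : 0 <= opnorm (1%:M : 'M[C]_n) <= 1.
Proof. by apply: opnorm_le1 => v; rewrite mul1mx. Qed.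

Lemma KbE N a b c d (v : 'cV[C]_(N + N)) :
  Kb N a b c d *m v = col_mx (a *: usubmx v + b *: dsubmx v) (c *: usubmx v + d *: dsubmx v).
Proof. by rewrite -{1}(vsubmxK v) /Kb mul_block_col !mul_scalar_mx. Qed.

Lemma opnormK N (a b c d : C) :
  (forall v1 v2 : 'cV[C]_N, sqn (a *: v1 + b *: v2) + sqn (c *: v1 + d *: v2) <= sqn v1 + sqn v2) ->
  0 <= opnorm (Kb N a b c d) <= 1.
Proof.
move=> H; apply: opnorm_le1 => v; rewrite KbE sqn_col.
suff -> : sqn v = sqn (usubmx v) + sqn (dsubmx v) by exact: H.
by rewrite -sqn_col vsubmxK.
Qed.

Lemma Kb_mul N (a b c d a' b' c' d' : C) :
  Kb N a b c d *m Kb N a' b' c' d' =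
  Kb N (a * a' + b * c') (a * b' + b * d') (c * a' + d * c') (c * b' + d * d').
Proof.
by rewrite /Kb mulmx_block -!scalar_mxM !raddfD.
Qed.

Lemma Kb1 N : Kb N 1 0 0 1 = 1%:M :> 'M[C]_(N + N).
Proof. by rewrite /Kb (scalar_mx_block N N) !raddf0. Qed.

Lemma Kb_inv N (c : C) :
  Kb N 1 c 0 1 \in unitmx /\ invmx (Kb N 1 c 0 1) = Kb N 1 (- c) 0 1.
Proof.
have H : Kb N 1 c 0 1 *m Kb N 1 (- c) 0 1 = 1%:M.
  rewrite Kb_mul -Kb1; congr Kb; ring.
have [U _] := mulmx1_unit H; split => //.
by rewrite -[invmx _]mulmx1 -H mulmxA mulVmx // mul1mx.
Qed.

End Opn.


Section Blk.
Variable R : realType.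
Local Notation C := (R[i]).
Variable V : lmodType C.

Lemma scalemxNl n (c : C) (X : 'M[V]_n) : scalemxV (- c) X = - scalemxV c X.
Proof. by apply/matrixP => i j; rewrite !mxE scaleNr. Qed.

Lemma sim_formula N (c : C) (A B : 'M[V]_N) :
  cmul (Kb N 1 c 0 1) (dsum A B) (invmx (Kb N 1 c 0 1)) =
  block_mx A (scalemxV c (B - A)) 0 B.
Proof.
rewrite (Kb_inv N c).2 cmulE /dsum rmulK lmulK.
rewrite ?scalemxV1 ?scalemxV0 ?scalemxV_0 ?(add0r, addr0).
by rewrite scalemxV_0 addr0 scalemxVB scalemxNl addrC.
Qed.

Variable nrm : forall n, 'M[V]_n -> R.
Hypothesis Hop : opspace nrm.

Lemma Ruan1 n (T S : 'M[C]_n) (X : 'M[V]_n) : (0 < n)%N ->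
  0 <= opnorm T <= 1 -> 0 <= opnorm S <= 1 -> nrm (cmul T X S) <= nrm X.
Proof.
move=> n0 /andP[t0 t1] /andP[s0 s1]; apply: le_trans (nrm_cmul Hop T S X n0) _.
have x0 := nrm_ge0 Hop X n0.
have h1 : opnorm T * nrm X <= nrm X by rewrite ler_piMl.
have h2 : opnorm T * nrm X * opnorm S <= opnorm T * nrm X.
  by rewrite ler_piMr // mulr_ge0.
exact: le_trans h2 h1.
Qed.

Lemma nrm_dsum0 N (b : 'M[V]_N) : (0 < N)%N -> nrm (dsum (0 : 'M[V]_N) b) = nrm b.
Proof.
move=> N0; rewrite (nrm_dsum Hop) // (nrm0 Hop) //.
by apply/max_r/(nrm_ge0 Hop).
Qed.

Lemma B1 N (b : 'M[V]_N) : (0 < N)%N -> nrm (block_mx 0 b 0 0 : 'M_(N + N)) <= nrm b.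
Proof.
move=> N0.
have -> : (block_mx 0 b 0 0 : 'M_(N + N)) = cmul (Kb N 0 1 0 0) (dsum (0 : 'M[V]_N) b) (Kb N 1 0 0 1).
  rewrite cmulE /dsum rmulK lmulK.
  by rewrite ?scalemxV1 ?scalemxV0 ?scalemxV_0 ?(add0r, addr0).
rewrite -(nrm_dsum0 b N0); apply: Ruan1; first by rewrite addn_gt0 N0.
  apply: opnormK => v1 v2; rewrite (scale0r v1) (scale0r v2) (scale1r v2) !add0r sqn0.
  by have := sqn_ge0 v1; lra.
rewrite Kb1; exact: opnorm1.
Qed.

Lemma B2 N (a b c d : 'M[V]_N) : (0 < N)%N -> nrm b <= nrm (block_mx a b c d).
Proof.
move=> N0.
have E : dsum (0 : 'M[V]_N) b = cmul (Kb N 0 0 1 0) (block_mx a b c d) (Kb N 0 0 0 1).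
  rewrite cmulE rmulK lmulK /dsum.
  by rewrite ?scalemxV1 ?scalemxV0 ?scalemxV_0 ?(add0r, addr0).
rewrite -(nrm_dsum0 b N0) E; apply: Ruan1; first by rewrite addn_gt0 N0.
  apply: opnormK => v1 v2; rewrite (scale0r v1) (scale0r v2) (scale1r v1) !add0r addr0 sqn0.
  by have := sqn_ge0 v2; lra.
apply: opnormK => v1 v2; rewrite (scale0r v1) (scale0r v2) (scale1r v2) !add0r sqn0.
by have := sqn_ge0 v1; lra.
Qed.

Lemma Bnorm N (a b d : 'M[V]_N) : (0 < N)%N ->
  nrm (block_mx a b 0 d) <= Num.max (nrm a) (nrm d) + nrm b.
Proof.
move=> N0.
have -> : block_mx a b 0 d = dsum a d + block_mx 0 b 0 0.
  by rewrite /dsum add_block_mx !(addr0, add0r).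
rewrite -(nrm_dsum Hop) //; apply: le_trans (nrmD Hop _ _ _) _; first by rewrite addn_gt0 N0.
by rewrite lerD2l B1.
Qed.

End Blk.


Section Balls.
Variable R : realType.
Local Notation C := (R[i]).
Variable V : lmodType C.
Variable nrm : forall n, 'M[V]_n -> R.
Hypothesis Hop : opspace nrm.

Lemma nrm_ampl s k (Y : 'M[V]_s) : (0 < s)%N -> (0 < k)%N -> nrm (ampl k Y) = nrm Y.
Proof.
move=> s0; elim: k => [//|k IH] _.
case: k IH => [|k] IH; first by apply: (ncp_fun nrm); exact: ampl1.
rewrite [ampl _ _]/= (nrm_dsum Hop) //; last exact: (leq_trans s0 (leq_addr _ _)).
by have := IH isT; move=> /= ->; rewrite maxxx.
Qed.

Lemma ball_charP s (Y : 'M[V]_s) (r : R) N (P : 'M[V]_N) :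
  ncball nrm Y r (ncp P) <->
  exists m, (0 < m)%N /\ exists Ym : 'M[V]_N, ncp Ym = ncp (ampl m Y) /\ nrm (P - Ym) < r.
Proof.
split.
  move=> [m [X [m0 [E H]]]]; exists m; split => //.
  have e := ncp_size E; subst N; rewrite (ncp_inj E).
  by exists (ampl m Y); split.
move=> [m [m0 [Ym [E H]]]].
have e := ncp_size E; subst N.
rewrite (ncp_inj E) in H.
by exists m, P; split.
Qed.

Lemma ball_mono s (Y : 'M[V]_s) (r r' : R) : r <= r' -> ncball nrm Y r `<=` ncball nrm Y r'.
Proof.
move=> rr p [m [X [m0 [E H]]]]; exists m, X; split => //; split => //.
exact: lt_le_trans rr.
Qed.

Lemma ball_center s (Y : 'M[V]_s) (r : R) : (0 < s)%N -> 0 < r -> ncball nrm Y r (ncp Y).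
Proof.
move=> s0 r0; apply/ball_charP; exists 1%N; split => //; exists Y; split.
  by rewrite ampl1.
by rewrite subrr (nrm0 Hop).
Qed.

Lemma ball_size s (Y : 'M[V]_s) (r : R) N (P : 'M[V]_N) : (0 < s)%N ->
  ncball nrm Y r (ncp P) -> (0 < N)%N.
Proof.
move=> s0 [m [X [m0 [E H]]]]; rewrite (ncp_size E) muln_gt0 m0 s0 //.
Qed.

Lemma ball_nest s (Y : 'M[V]_s) (r : R) N (X : 'M[V]_N) : (0 < s)%N ->
  ncball nrm Y r (ncp X) ->
  exists d, 0 < d /\ ncball nrm X d `<=` ncball nrm Y r.
Proof.
move=> s0 HX; have N0 := ball_size s0 HX.
case/ball_charP: HX => m [m0 [Ym [E H]]].
exists (r - nrm (X - Ym)); split; first by rewrite subr_gt0.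
move=> p [k [Z [k0 [-> HZ]]]].
apply/ball_charP; exists (k * m)%N; split; first by rewrite muln_gt0 k0 m0.
exists (ampl k Ym); split.
  by rewrite (ncp_ampl k E) ampl_mul.
have kN : (0 < k * N)%N by rewrite muln_gt0 k0 N0.
have -> : Z - ampl k Ym = (Z - ampl k X) + ampl k (X - Ym).
  by rewrite ampl_sub addrA subrK.
apply: le_lt_trans (nrmD Hop _ _ kN) _.
rewrite (nrm_ampl _ N0 k0); lra.
Qed.

Lemma uopen_pos (Om : set (ncpt V)) N (X : 'M[V]_N) : uopen nrm Om -> Om (ncp X) -> (0 < N)%N.
Proof.
move=> HO HX; have [s [Y [r [s0 r0 HB _]]]] := HO _ HX.
exact: ball_size s0 HB.
Qed.

Lemma uopen_ball (Om : set (ncpt V)) N (X : 'M[V]_N) : uopen nrm Om -> Om (ncp X) ->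
  exists d, 0 < d /\ ncball nrm X d `<=` Om.
Proof.
move=> HO HX; have [s [Y [r [s0 r0 HB HS]]]] := HO _ HX.
have [d [d0 Hd]] := ball_nest s0 HB.
by exists d; split => // p /Hd /HS.
Qed.

End Balls.


Section NC.
Variable R : realType.
Local Notation C := (R[i]).
Variables V W : lmodType C.
Variable nV : forall n, 'M[V]_n -> R.
Variable nW : forall n, 'M[W]_n -> R.
Variable Om : set (ncpt V).
Variable f : forall n, 'M[V]_n -> 'M[W]_n.
Hypothesis HV : opspace nV.
Hypothesis HW : opspace nW.
Hypothesis HOm : uopen nV Om.
Hypothesis Hnc : ncset Om.
Hypothesis Hf : ncfun Om f.

Lemma f_ampl N (X : 'M[V]_N) k : Om (ncp X) -> (0 < k)%N ->
  Om (ncp (ampl k X)) /\ f (ampl k X) = ampl k (f X).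
Proof.
move=> HX; elim: k => [//|k IH] _.
case: k IH => [|k] IH.
  split; first by rewrite ampl1.
  apply: ncp_inj; rewrite ampl1.
  exact: (ncp_fun (fun n M => ncp (f M)) (ampl1 X)).
have [H1 H2] := IH isT.
split; first exact: Hnc.
by rewrite [ampl _ X]/= Hf.1 // H2.
Qed.

Lemma sizes_eq s m1 m2 N (A : 'M[V]_N) (B : 'M[V]_N) (Y : 'M[V]_s) : (0 < s)%N ->
  ncp A = ncp (ampl m1 Y) -> ncp B = ncp (ampl m2 Y) -> A = B.
Proof.
move=> s0 E1 E2; have e1 := ncp_size E1; have e2 := ncp_size E2.
have em : m1 = m2 by apply/eqP; rewrite -(eqn_pmul2r s0) -e1 -e2.
by subst m2; apply: ncp_inj; rewrite E1 E2.
Qed.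

Lemma Lip s (Y : 'M[V]_s) (r M : R) : (0 < s)%N -> 0 < r ->
  ncball nV Y r `<=` Om ->
  (forall n (X : 'M[V]_n), ncball nV Y r (ncp X) -> nW (f X) <= M) ->
  forall N (A B : 'M[V]_N), ncball nV Y (r / 2) (ncp A) -> ncball nV Y (r / 2) (ncp B) ->
  nW (f A - f B) <= 4 * M / r * nV (A - B).
Proof.
move=> s0 r0 HB HM N A B HA HBb.
have N0 := ball_size s0 HA.
have Hr2 : r / 2 <= r by lra.
have OA : Om (ncp A) by apply: HB; apply: (ball_mono Hr2).
have OB : Om (ncp B) by apply: HB; apply: (ball_mono Hr2).
case/ball_charP: HA => ma [ma0 [Ya [Ea HA]]].
case/ball_charP: HBb => mb [mb0 [Yb [Eb HBb]]].
have eY : Yb = Ya := sizes_eq s0 Eb Ea.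
subst Yb.
have [dz | dnz] := eqVneq (nV (B - A)) 0.
  have eAB : B = A by apply/eqP; rewrite -subr_eq0; apply/eqP/(nrm_eq0 HV N0).
  by subst B; rewrite !subrr (nrm0 HW) // (nrm0 HV) // mulr0.
have d0 : 0 < nV (B - A) by rewrite lt_def dnz (nrm_ge0 HV).
set d := nV (B - A) in d0 dnz *.
pose c := r / (4 * d).
have c0 : 0 < c by rewrite /c divr_gt0 // mulr_gt0.
have cd : c * d = r / 4 by rewrite /c; field; do ?split; rewrite ?lt0r_neq0.
have [TU TI] := Kb_inv N (c%:C)%C.
have OAB : Om (ncp (dsum A B)) := Hnc OA OB.
pose Q := block_mx A (scalemxV (c%:C)%C (B - A)) 0 B.
have EQ : cmul (Kb N 1 (c%:C)%C 0 1) (dsum A B) (invmx (Kb N 1 (c%:C)%C 0 1)) = Q.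
  exact: sim_formula.
have BQ : ncball nV Y r (ncp Q).
  apply/ball_charP; exists (ma + ma)%N; split; first by rewrite addn_gt0 ma0.
  exists (dsum Ya Ya); split.
    by rewrite (ncp_dsum Ea Ea) ampl_add.
  have -> : Q - dsum Ya Ya = block_mx (A - Ya) (scalemxV (c%:C)%C (B - A)) 0 (B - Ya).
    by rewrite /Q /dsum opp_block_mx add_block_mx oppr0 !addr0.
  apply: le_lt_trans (Bnorm HV _ _ _ N0) _.
  rewrite (nrmZ HV) // cabsR (ger0_norm (ltW c0)) cd.
  have : Num.max (nV (A - Ya)) (nV (B - Ya)) < r / 2 by rewrite gt_max HA HBb.
  lra.
have OQ : Om (ncp Q) := HB _ BQ.
have fQ : f Q = block_mx (f A) (scalemxV (c%:C)%C (f B - f A)) 0 (f B).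
  by rewrite -EQ Hf.2 // ?EQ // Hf.1 // sim_formula.
have MQ := HM _ _ BQ.
have := B2 HW (f A) (scalemxV (c%:C)%C (f B - f A)) 0 (f B) N0.
rewrite -fQ (nrmZ HW) // cabsR (ger0_norm (ltW c0)) => H.
rewrite (nrmB HW (f A) (f B) N0).
have H2 : c * nW (f B - f A) <= M := le_trans H MQ.
have -> : nW (f B - f A) = c * nW (f B - f A) * (4 * d / r).
  rewrite mulrC mulrA; have -> : 4 * d / r * c = 1.
    by rewrite /c; field; do ?split; rewrite ?lt0r_neq0.
  by rewrite mul1r.
rewrite (nrmB HV A B N0) -/d.
have -> : 4 * M / r * d = M * (4 * d / r) by field; do ?split; rewrite ?lt0r_neq0.
by rewrite ler_wpM2r // ?divr_ge0 ?mulr_ge0 ?ltW.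
Qed.


Lemma ursubB N (P Q : 'M[W]_(N + N)) : ursubmx (P - Q) = ursubmx P - ursubmx Q.
Proof. by apply/matrixP => i j; rewrite !mxE. Qed.

Lemma ursub_le N (D : 'M[W]_(N + N)) : (0 < N)%N -> nW (ursubmx D) <= nW D.
Proof. by move=> N0; rewrite -{2}(submxK D); apply: B2. Qed.

Lemma ball2 n (X : 'M[V]_n) (P : 'M[V]_(n + n)) rho : (0 < n)%N ->
  nV (P - dsum X X) < rho -> ncball nV X rho (ncp P).
Proof.
move=> n0 H; apply/ball_charP; exists 2%N; split => //; exists (dsum X X); split => //.
by apply: ncp_dsum => //; rewrite ampl1.
Qed.

Lemma LB_Gdiff : uloc_bounded nV nW Om f -> G_differentiable nW Om f.
Proof.
move=> HLB n X Z HX.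
have n0 := uopen_pos HOm HX.
have [r [r0 HBO [M HM]]] := HLB n X HX.
have M0 : 0 <= M.
  by apply: le_trans (HM _ _ (ball_center HV X n0 r0)); apply: (nrm_ge0 HW).
have Lp := Lip n0 r0 HBO HM.
have z0 : 0 <= nV Z := nrm_ge0 HV Z n0.
pose eps := r / (4 * ((nV Z) + 1)).
have eps0 : 0 < eps by rewrite /eps divr_gt0 // mulr_gt0 // ltr_wpDl.
have epsz1 : eps * ((nV Z) + 1) = r / 4.
  by rewrite /eps; field; do ?split; rewrite ?lt0r_neq0 // ltr_wpDl.
have epsz : eps * (nV Z) < r / 4 by lra.
pose K := 4 * M / r.
have K0 : 0 <= K by rewrite /K divr_ge0 ?mulr_ge0 // ltW.
pose P0 := block_mx X (scalemxV (eps%:C)%C Z) 0 X.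
exists (scalemxV ((eps%:C)%C)^-1 (ursubmx (f P0))).
move=> e e0.
have Kz0 : 0 < K * (nV Z) + 1 by rewrite ltr_wpDl // mulr_ge0.
exists (Num.min eps (e * eps / (K * (nV Z) + 1))); split.
  by rewrite lt_min eps0 divr_gt0 // mulr_gt0.
move=> t tnz; rewrite lt_min => /andP[te td].
have t0 : 0 <= cabs t := cabs_ge0 t.
have tz : cabs t * (nV Z) <= eps * (nV Z) by rewrite ler_wpM2r // ltW.
pose A := X + scalemxV t Z.
have HAX : A - X = scalemxV t Z by rewrite /A addrAC subrr add0r.
have OA : Om (ncp A).
  apply: HBO; apply/ball_charP; exists 1%N; split => //; exists X; split.
    by rewrite ampl1.
  rewrite HAX (nrmZ HV) //; lra.
pose P1 := block_mx A (scalemxV (eps%:C)%C Z) 0 X.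
have B0 : ncball nV X (r / 2) (ncp P0).
  apply: ball2 => //.
  have -> : P0 - dsum X X = block_mx (X - X) (scalemxV (eps%:C)%C Z) 0 (X - X).
    by rewrite /P0 /dsum opp_block_mx add_block_mx !oppr0 !addr0.
  apply: le_lt_trans (Bnorm HV _ _ _ n0) _.
  rewrite subrr (nrm0 HV) // maxxx (nrmZ HV) // cabsR (ger0_norm (ltW eps0)); lra.
have B1' : ncball nV X (r / 2) (ncp P1).
  apply: ball2 => //.
  have -> : P1 - dsum X X = block_mx (A - X) (scalemxV (eps%:C)%C Z) 0 (X - X).
    by rewrite /P1 /dsum opp_block_mx add_block_mx !oppr0 !addr0.
  apply: le_lt_trans (Bnorm HV _ _ _ n0) _.
  rewrite subrr (nrm0 HV) // HAX (nrmZ HV) // (nrmZ HV) // cabsR (ger0_norm (ltW eps0)).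
  rewrite max_l ?mulr_ge0 //; lra.
have OP1 : Om (ncp P1) by apply: HBO; apply: (ball_mono _ B1'); lra.
pose c := - ((eps%:C)%C / t).
have EP1 : P1 = block_mx A (scalemxV c (X - A)) 0 X.
  rewrite /P1; congr block_mx.
  rewrite -opprB HAX scalemxVN scalemxVA -scalemxNl; congr scalemxV.
  rewrite /c; field; exact: tnz.
have [TU _] := Kb_inv n c.
have fP1 : f P1 = block_mx (f A) (scalemxV c (f X - f A)) 0 (f X).
  rewrite EP1 -(sim_formula c A X) Hf.2 //; last 2 first.
  - exact: Hnc.
  - by rewrite sim_formula -EP1.
  by rewrite Hf.1 // sim_formula.
have -> : scalemxV t^-1 (f (X + scalemxV t Z) - f X) =
          scalemxV ((eps%:C)%C)^-1 (ursubmx (f P1)).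
  rewrite fP1 block_mxKur scalemxVA -/A -opprB scalemxVN -scalemxNl.
  congr scalemxV; rewrite /c; field; apply/andP; split => //.
  by rewrite lt0r_neq0 // ltcR.
rewrite -scalemxVB -ursubB (nrmZ HW) // cabsV cabsR (ger0_norm (ltW eps0)).
have nn : (0 < n + n)%N by rewrite addn_gt0 n0.
have H1 : nW (ursubmx (f P1 - f P0)) <= K * nV (P1 - P0).
  exact: le_trans (ursub_le _ n0) (Lp _ _ _ B1' B0).
have H2 : nV (P1 - P0) <= cabs t * (nV Z).
  have -> : P1 - P0 = block_mx (A - X) 0 0 (X - X).
    by rewrite /P1 /P0 opp_block_mx add_block_mx !oppr0 !addr0 subrr.
  apply: le_trans (Bnorm HV _ _ _ n0) _.
  rewrite subrr (nrm0 HV) // HAX (nrmZ HV) // max_l ?mulr_ge0 // addr0.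
  done.
have H3 : cabs t * (K * (nV Z) + 1) < e * eps by rewrite -ltr_pdivlMr.
rewrite ltr_pdivrMl //.
have H4 : K * nV (P1 - P0) <= K * (cabs t * (nV Z)) by rewrite ler_wpM2l.
have H5 : K * (cabs t * (nV Z)) <= cabs t * (K * (nV Z) + 1).
  by rewrite mulrDr mulr1 mulrCA lerDl.
lra.
Qed.

End NC.


Section Cont.
Variable R : realType.
Local Notation C := (R[i]).
Variables V W : lmodType C.
Variable nV : forall n, 'M[V]_n -> R.
Variable nW : forall n, 'M[W]_n -> R.
Variable Om : set (ncpt V).
Variable f : forall n, 'M[V]_n -> 'M[W]_n.
Hypothesis HV : opspace nV.
Hypothesis HW : opspace nW.
Hypothesis HOm : uopen nV Om.
Hypothesis Hnc : ncset Om.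
Hypothesis Hf : ncfun Om f.

Lemma LB_cont : uloc_bounded nV nW Om f -> ucontinuous nV nW Om f.
Proof.
move=> HLB U HU.
pose G := fun q : ncpt V => Om q /\ forall n (X : 'M[V]_n), q = ncp X -> U (ncp (f X)).
pose O := fun p : ncpt V => exists s (Y : 'M[V]_s) r,
  [/\ (0 < s)%N, 0 < r, ncball nV Y r p & ncball nV Y r `<=` G].
exists O; split.
  move=> p [s [Y [r [s0 r0 Hp HG]]]]; exists s, Y, r; split => // q Hq.
  by exists s, Y, r; split.
move=> n X; split; last first.
  move=> [HX [s [Y [r [s0 r0 Hp HG]]]]]; split => //.
  by have [_ H] := HG _ Hp; apply: H.
move=> [HX HUX]; split => //.
have n0 := uopen_pos HOm HX.
have [r [r0 HBO [M HM]]] := HLB n X HX.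
have M0 : 0 <= M.
  by apply: le_trans (HM _ _ (ball_center HV X n0 r0)); apply: (nrm_ge0 HW).
have Lp := Lip HV HW Hnc Hf n0 r0 HBO HM.
have [s' [Y' [r' [s'0 r'0 HfX HUb]]]] := HU _ HUX.
have [d [d0 Hd]] := ball_nest HW s'0 HfX.
pose K := 4 * M / r.
have K0 : 0 <= K by rewrite /K divr_ge0 ?mulr_ge0 // ltW.
pose rho := Num.min (r / 2) (d / (K + 1)).
have K1 : 0 < K + 1 by rewrite ltr_wpDl.
have rho0 : 0 < rho by rewrite lt_min divr_gt0 // divr_gt0.
have rho1 : rho <= r / 2 by rewrite ge_min lexx.
have rho2 : rho <= d / (K + 1) by rewrite ge_min lexx orbT.
exists n, X, rho; split => //; first exact: ball_center.
move=> q Hq; split.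
  by apply: HBO; apply: (ball_mono _ Hq); lra.
move=> m X' EX'.
case: Hq => k [Z [k0 [Eq HZ]]].
rewrite Eq in EX'; have e := ncp_size EX'; subst m.
rewrite -(ncp_inj EX').
have [OK FK] := f_ampl Hnc Hf HX k0.
apply: HUb; apply: Hd.
exists k, (f Z); split => //; split => //.
rewrite -FK.
have BZ : ncball nV X (r / 2) (ncp Z).
  by apply: (ball_mono rho1); exists k, Z.
have BK : ncball nV X (r / 2) (ncp (ampl k X)).
  apply/ball_charP; exists k; split => //; exists (ampl k X); split => //.
  by rewrite subrr (nrm0 HV) ?divr_gt0 // muln_gt0 k0 n0.
apply: le_lt_trans (Lp _ _ _ BZ BK) _.
have H1 : K * nV (Z - ampl k X) <= K * rho by rewrite ler_wpM2l // ltW.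
have H2 : K * rho <= K * (d / (K + 1)) by rewrite ler_wpM2l.
have H3 : K * (d / (K + 1)) < d.
  have q0 : 0 < d / (K + 1) by rewrite divr_gt0.
  have -> : K * (d / (K + 1)) = d - d / (K + 1).
    by field; do ?split; rewrite ?lt0r_neq0.
  lra.
rewrite -/K; lra.
Qed.

Lemma cont_LB : ucontinuous nV nW Om f -> uloc_bounded nV nW Om f.
Proof.
move=> HC s Y HY.
have s0 := uopen_pos HOm HY.
pose U := ncball nW (f Y) 1.
have HU : uopen nW U.
  move=> p Hp; case: (Hp) => m [X [m0 [Ep _]]].
  rewrite Ep in Hp *.
  have X0 := ball_size s0 Hp.
  have [d [d0 Hd]] := ball_nest HW s0 Hp.
  by exists (m * s)%N, X, d; split => //; apply: ball_center.
have [O [HO HE]] := HC U HU.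
have [_ OY] := (HE s Y).1 (conj HY (ball_center HW (f Y) s0 ltr01)).
have [d1 [d10 H1]] := uopen_ball HV HO OY.
have [d2 [d20 H2]] := uopen_ball HV HOm HY.
exists (Num.min d1 d2); split.
- by rewrite lt_min d10 d20.
- by move=> p Hp; apply: H2; apply: (ball_mono _ Hp); rewrite ge_min lexx orbT.
exists (nW (f Y) + 1) => n X HX.
have OX : Om (ncp X) by apply: H2; apply: (ball_mono _ HX); rewrite ge_min lexx orbT.
have OOX : O (ncp X) by apply: H1; apply: (ball_mono _ HX); rewrite ge_min lexx.
have [_ UX] := (HE n X).2 (conj OX OOX).
have n0 := uopen_pos HOm OX.
case/ball_charP: UX => m [m0 [Ym [Em HYm]]].
have -> : f X = (f X - Ym) + Ym by rewrite subrK.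
apply: le_trans (nrmD HW _ _ n0) _.
have -> : nW Ym = nW (f Y) by rewrite (ncp_fun nW Em) (nrm_ampl HW).
lra.
Qed.

End Cont.

Theorem corollary7p28 (R : realType) (V W : lmodType R[i])
    (nV : forall n, 'M[V]_n -> R) (nW : forall n, 'M[W]_n -> R)
    (Om : set (ncpt V)) (f : forall n, 'M[V]_n -> 'M[W]_n) :
  opspace nV -> opspace nW -> uopen nV Om -> ncset Om -> ncfun Om f ->
  (uloc_bounded nV nW Om f <-> ucontinuous nV nW Om f) /\
  (ucontinuous nV nW Om f <-> uanalytic nV nW Om f).
Proof.
move=> HV HW HOm Hnc Hf.
have H1 : uloc_bounded nV nW Om f -> ucontinuous nV nW Om f by apply: LB_cont.
have H2 : ucontinuous nV nW Om f -> uloc_bounded nV nW Om f by apply: cont_LB.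
have H3 : uloc_bounded nV nW Om f -> G_differentiable nW Om f by apply: LB_Gdiff.
split; first by split.
split; last by case=> HL _; apply: H1.
by move=> Hc; split; [apply: H2 | apply: H3; apply: H2].
Qed.
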